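(* Let $f$ be a convergent power series in $\mathbf z=(z_1,\dots,z_n)$ with $f(\mathbf 0)=0$. Let $P=(p_1,\dots,p_n)$ be a vertex of the dual Newton diagram $\Gamma^*(f)$ which is not strictly positive, and put $I(P)=\{i:p_i=0\}$. If $\mathbb C^{I(P)}$ is not a vanishing coordinate subspace of $f$, then $P$ is (up to the positive scaling with which vertices are defined) one of the standard basis vectors $e_1,\dots,e_n$.
   Context: Newton diagram $\Gamma_+(f)$: convex hull of $\bigcup_{c_\nu\ne0}(\nu+\mathbb R_{\ge0}^n)$ for $f=\sum c_\nu\mathbf z^\nu$. For a weight vector $P\in\mathbb R_{\ge0}^n$, $\Delta(P,f)$ is the face of $\Gamma_+(f)$ on which $\nu\mapsto\sum p_i\nu_i$ attains its minimum. $P\sim Q$ iff $\Delta(P,f)=\Delta(Q,f)$; the classes form a cone subdivision $\Gamma^*(f)$ of $\mathbb R_{\ge0}^n$, and a vertex is a non-zero weight vector spanning a one-dimensional cone of this subdivision. $P$ is strictly positive if all $p_i>0$. For $I\subset\{1,\dots,n\}$, $\mathbb C^I=\{\mathbf z: z_j=0 \text{ for } j\notin I\}$ and $f^I=f|_{\mathbb C^I}$; $\mathbb C^I$ is a vanishing coordinate subspace if $f^I\equiv0$. *)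

(* Defs.v *)
From HB Require Import structures.
From mathcomp Require Import all_boot all_order all_algebra.
From mathcomp Require Import reals.
From mathcomp.real_closed Require Import complex.
Set Implicit Arguments. Unset Strict Implicit. Unset Printing Implicit Defensive.
Import Order.TTheory GRing.Theory Num.Theory.
Local Open Scope ring_scope.

Definition expo (n : nat) := {ffun 'I_n -> nat}.

(* A formal power series in z_1..z_n with complex coefficients:
   f = sum_nu (f nu) z^nu. *)
Definition pseries (R : realType) (n : nat) := expo n -> R[i].

Definition deg n (nu : expo n) : nat := (\sum_(i < n) nu i)%N.

(* convergent: absolutely convergent on some polydisc of radius r > 0 *)
Definition convergent (R : realType) n (f : pseries R n) : Prop :=
  exists r : R, 0 < r /\ exists M : R, forall s : seq (expo n), uniq s ->
    \sum_(nu <- s) `|f nu| * (r%:C)%C ^+ deg nu <= (M%:C)%C.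

Definition zero_expo n : expo n := [ffun => 0%N].

(* Newton diagram Gamma_+(f): convex hull of the union of nu + R_{>=0}^n
   over nu with f nu != 0 *)
Definition in_newton (R : realType) n (f : pseries R n) (x : 'I_n -> R) : Prop :=
  exists (s : seq (expo n)) (lam : expo n -> R),
    (forall nu, nu \in s -> f nu != 0 /\ 0 <= lam nu) /\
    \sum_(nu <- s) lam nu = 1 /\
    (forall i, \sum_(nu <- s) lam nu * (nu i)%:R <= x i).

Definition dotw (R : realType) n (P x : 'I_n -> R) : R := \sum_(i < n) P i * x i.

Definition weight (R : realType) n (P : 'I_n -> R) : Prop := forall i, 0 <= P i.

Definition face (R : realType) n (f : pseries R n) (P : 'I_n -> R) (x : 'I_n -> R) : Prop :=
  in_newton f x /\ forall y, in_newton f y -> dotw P x <= dotw P y.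

Definition wequiv (R : realType) n (f : pseries R n) (P Q : 'I_n -> R) : Prop :=
  forall x, face f P x <-> face f Q x.

(* vertex of Gamma^*(f): non-zero weight vector whose equivalence class
   (a relatively open cone of the subdivision) is the one-dimensional
   open ray spanned by P *)
Definition vertex (R : realType) n (f : pseries R n) (P : 'I_n -> R) : Prop :=
  weight P /\ (exists i, P i != 0) /\
  forall Q, weight Q -> (wequiv f P Q <-> exists t : R, 0 < t /\ Q = (fun i => t * P i)).

(* C^I is a vanishing coordinate subspace: f^I = f|_{C^I} == 0, i.e. all
   coefficients of monomials in the variables z_i (i in I) only vanish *)
Definition vanishing_coord (R : realType) n (f : pseries R n) (I : {set 'I_n}) : Prop :=
  forall nu : expo n, (forall j, j \notin I -> nu j = 0%N) -> f nu = 0.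

(* Main.v *)
Require Import Defs.
From HB Require Import structures.
From mathcomp Require Import all_boot all_order all_algebra.
From mathcomp Require Import reals.
From mathcomp.real_closed Require Import complex.
From mathcomp Require Import boolp.
Import Order.TTheory GRing.Theory Num.Theory.
Local Open Scope ring_scope.

Section S.
Local Set Implicit Arguments.
Variables (R : realType) (n : nat) (f : pseries R n).

Lemma newton_ge0 x : in_newton f x -> forall j, 0 <= x j.
Proof.
move=> [s [lam [Hs [_ Hx]]]] j; apply: le_trans (Hx j).
rewrite big_seq; apply: sumr_ge0 => nu /Hs [_ ?].
by apply: mulr_ge0.
Qed.

Lemma dotw_ge0 P x : weight P -> in_newton f x -> 0 <= dotw P x.
Proof.
move=> HP Hx; apply: sumr_ge0 => j _; apply: mulr_ge0 => //.
exact: newton_ge0.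
Qed.

Lemma dotw_eq0 P x : weight P -> in_newton f x ->
  (dotw P x = 0 <-> forall j, P j != 0 -> x j = 0).
Proof.
move=> HP Hx; split.
  move=> H0 j Pj.
  have := (@psumr_eq0P _ _ xpredT (fun k => P k * x k) (fun k _ => mulr_ge0 (HP k) (newton_ge0 Hx k)) H0 j isT).
  by move/eqP; rewrite mulf_eq0 (negbTE Pj) /= => /eqP.
move=> H; apply: big1 => j _.
by case: (eqVneq (P j) 0) => [->|/H ->]; rewrite ?mul0r ?mulr0.
Qed.

Lemma newton_nu nu : f nu != 0 -> in_newton f (fun i => (nu i)%:R).
Proof.
move=> Hf; exists [:: nu], (fun _ => 1); split.
  by move=> mu; rewrite inE => /eqP ->; split.
by split; [rewrite big_seq1 | move=> i; rewrite big_seq1 mul1r].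
Qed.

Lemma face_char P nu x : weight P -> f nu != 0 ->
  (forall j, P j != 0 -> nu j = 0%N) ->
  (face f P x <-> in_newton f x /\ forall j, P j != 0 -> x j = 0).
Proof.
move=> HP Hf Hnu.
have Hn := @newton_nu nu Hf.
have D0 : dotw P (fun i => (nu i)%:R) = 0.
  by apply/(dotw_eq0 HP Hn) => j /Hnu /= ->.
split.
  move=> [Hx Hm]; split => //; apply/(dotw_eq0 HP Hx).
  apply/eqP; rewrite eq_le dotw_ge0 // andbT -D0; exact: Hm.
move=> [Hx Hz]; split => // y Hy.
by rewrite (proj2 (dotw_eq0 HP Hx) Hz); apply: dotw_ge0.
Qed.

End S.

Theorem proposition8 (R : realType) (n : nat) (f : pseries R n) :
  convergent f -> f (zero_expo n) = 0 ->
  forall P : 'I_n -> R, vertex f P ->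
  (exists i, P i = 0) ->
  ~ vanishing_coord f [set i | P i == 0] ->
  exists (i : 'I_n) (t : R), 0 < t /\ P = (fun j => if j == i then t else 0).
Proof.
move=> _ _ P [HP [[i Pi] Hv]] _ Hnv.
have [nu [Hnu Hf]] : exists nu : expo n, (forall j, P j != 0 -> nu j = 0%N) /\ f nu != 0.
  case: (pselect (exists nu : expo n, (forall j, P j != 0 -> nu j = 0%N) /\ f nu != 0)) => // Hno.
  exfalso; apply: Hnv => nu Hs; apply/eqP/negP => Hne; apply: Hno; exists nu; split.
    by move=> j Pj; apply: Hs; rewrite inE.
  exact/negP.
case: (pselect (exists k, k != i /\ P k != 0)) => [[k [ki Pk]]|Hno].
  pose Q := fun j => P j + (if j == i then P j else 0).
  have HQ : weight Q.
    by move=> j; rewrite /Q; case: (j == i); apply: addr_ge0 => //.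
  have Hsupp : forall j, (Q j != 0) = (P j != 0).
    move=> j; rewrite /Q; case: (j == i); last by rewrite addr0.
    by rewrite paddr_eq0 // andbb.
  have Hw : wequiv f P Q.
    move=> x; rewrite (@face_char R n f P nu x HP Hf Hnu) (@face_char R n f Q nu x HQ Hf).
      split=> -[Hx H]; split=> // j Hj; apply: H.
        by rewrite -Hsupp.
      by move: Hj; rewrite Hsupp.
    by move=> j Hj; apply: Hnu; move: Hj; rewrite Hsupp.
  have [t [t0 HQt]] := (proj1 (Hv Q HQ) Hw).
  have Hk := congr1 (fun g => g k) HQt; have Hi := congr1 (fun g => g i) HQt.
  rewrite /= /Q (negbTE ki) eqxx addr0 in Hk Hi.
  have t1 : t = 1.
    by apply: (mulIf Pk); rewrite mul1r -Hk.
  move: Hi; rewrite t1 mul1r => /eqP; rewrite -subr_eq0 addrK => /eqP Pi0.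
  by rewrite Pi0 eqxx in Pi.
exists i, (P i); split; first by rewrite lt_def Pi HP.
apply: funext => j; case: (eqVneq j i) => [->//|ji].
apply/eqP/negP => /negP Pj; apply: Hno; exists j; split => //.
Qed.
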